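(* Let $\mathcal{L}\subset\mathcal{L}_*$ be lineages with hierarchical generators $\mathcal{H},\mathcal{H}_*$, $\mathcal{R}=\mathcal{L}_*\setminus\mathcal{L}$ and $\mathcal{M}=\mathcal{R}\cap\mathcal{H}$. Then (i) for every $\psi_0\in\mathcal{R}$ there exist $k\ge0$ and $\psi_1,\dots,\psi_k$ such that $\psi_k\in\mathcal{M}$, $\psi_j\in\mathcal{R}\setminus\mathcal{M}$ and $\psi_j\in\mathrm{ch}(\psi_{j+1})$ for $j\in\{0,\dots,k-1\}$; (ii) for every $\varphi_*\in\mathcal{H}_*\setminus\mathcal{H}$ there is $\psi\in\mathcal{R}$ with $\varphi_*\in\mathrm{ch}(\psi)$; (iii) for every $\varphi_*\in\mathcal{H}_*\setminus\mathcal{H}$ there are $k\ge1$ and $\varphi\in\mathcal{M}$ with $\varphi_*\in\mathrm{ch}^k(\varphi)$.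
   Context: Fix integers $d\ge1$, $n\ge2$, $m\ge2$; $s=n-1$, $p=m-1$. B-splines $\varphi^\ell_{\vec i}(\vec x)=\prod_kQ(n^\ell x_k-i_k)$ for $\ell\ge0$, $\vec i\in\mathbb{Z}^d$, $Q$ the uniform B-spline of order $m$ with knots $0,\dots,m$; $\mathfrak{B}$ the set of all of them; $\mathcal{B}^0=\{\varphi^0_{\vec i}:\vec i\in[-p:0]^d\}$. Children $\mathrm{ch}(\varphi^\ell_{\vec i})=\{\varphi^{\ell+1}_{\vec k}:n\vec i\le\vec k\le n\vec i+sm\}$, extended to sets by union, $\mathrm{ch}^k$ the $k$-fold application. A lineage is a finite $\mathcal{L}\subset\mathfrak{B}$ with $\mathcal{L}\subset\mathcal{B}^0\cup\mathrm{ch}(\mathcal{L})$; its hierarchical generator is $(\mathcal{B}^0\cup\mathrm{ch}(\mathcal{L}))\setminus\mathcal{L}$. *)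

(* Defs.v *)
From HB Require Import structures.
From mathcomp Require Import all_boot all_order all_algebra.
Set Implicit Arguments. Unset Strict Implicit. Unset Printing Implicit Defensive.
Import Order.TTheory GRing.Theory Num.Theory.

(* A B-spline phi^l_i (for fixed d, n, m) is identified with its pair
   (level l, index vector i in Z^d); distinct pairs give distinct functions
   (their supports [i n^-l, (i+m) n^-l] differ), so this is a faithful encoding. *)
Definition bspl (d : nat) := (nat * {ffun 'I_d -> int})%type.

Local Open Scope ring_scope.

Definition child (d n m : nat) (phi psi : bspl d) : bool :=
  (phi.1 == psi.1.+1)%N &&
  [forall k : 'I_d,
     (n%:Z * psi.2 k <= phi.2 k) &&
     (phi.2 k <= n%:Z * psi.2 k + ((n.-1)%N * m)%N%:Z)].

Definition inB0 (d m : nat) (phi : bspl d) : bool :=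
  (phi.1 == 0)%N &&
  [forall k : 'I_d, (- (m.-1)%:Z <= phi.2 k) && (phi.2 k <= 0)].

Definition inch (d n m : nat) (L : seq (bspl d)) (phi : bspl d) : bool :=
  has (child n m phi) L.

Definition lineage (d n m : nat) (L : seq (bspl d)) : bool :=
  all (fun phi => inB0 m phi || inch n m L phi) L.

Definition inH (d n m : nat) (L : seq (bspl d)) (phi : bspl d) : bool :=
  (inB0 m phi || inch n m L phi) && (phi \notin L).

Fixpoint inchk (d n m : nat) (k : nat) (psi phi : bspl d) : Prop :=
  match k with
  | 0 => phi = psi
  | k'.+1 => exists chi : bspl d, inchk n m k' psi chi /\ child n m phi chi
  end.

(* Main.v *)
Require Import Defs.
From HB Require Import structures.
From mathcomp Require Import all_boot all_order all_algebra.

Section Aux.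
Variables (d n m : nat) (L Ls : seq (bspl d)).
Hypothesis hLs : lineage n m Ls.

Let inR := fun phi : bspl d => (phi \in Ls) && (phi \notin L).
Let inM := fun phi : bspl d => inR phi && inH n m L phi.

Lemma parent_in_R psi0 : inR psi0 -> ~~ inM psi0 ->
  exists p, inR p /\ child n m psi0 p.
Proof.
rewrite /inM /inR /inH => /andP[hin hnL]; rewrite hin hnL /= andbT negb_or.
case/andP=> nB0 nch.
have := allP hLs _ hin; rewrite (negbTE nB0) /= => /hasP[p pin hc].
exists p; split=> //; rewrite pin /=.
apply/negP=> pL; move/negP: nch; apply; apply/hasP; by exists p.
Qed.

Lemma chain_i l psi0 : (psi0.1 < l)%N -> inR psi0 ->
     exists (k : nat) (psi : nat -> bspl d),
       psi 0%N = psi0 /\ inM (psi k) /\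
       (forall j : nat, (j < k)%N ->
          inR (psi j) /\ ~~ inM (psi j) /\ child n m (psi j) (psi j.+1)).
Proof.
elim: l psi0 => [//|l IH] psi0 hl hR.
case hM: (inM psi0).
  by exists 0%N, (fun _ => psi0); split.
have [p [pR pc]] := parent_in_R psi0 hR (negbT hM).
have plt : (p.1 < l)%N.
  move: pc => /andP[/eqP e _]; move: hl; rewrite e ltnS; by [].
have [k [psi [h0 [hk hj]]]] := IH p plt pR.
exists k.+1, (fun j => if j is j'.+1 then psi j' else psi0); split=> //; split=> //.
case=> [|j] /= hjk; first by rewrite h0 hR hM.
exact: hj.
Qed.

Lemma chain_inchk k (psi : nat -> bspl d) :
  (forall j : nat, (j < k)%N -> child n m (psi j) (psi j.+1)) ->
  forall j, (j <= k)%N -> inchk n m j (psi k) (psi (k - j)%N).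
Proof.
move=> hc; elim=> [|j IH] hj /=; first by rewrite subn0.
exists (psi (k - j)%N); split; first by apply: IH; apply: ltnW.
have -> : (k - j = (k - j.+1).+1)%N by rewrite subnS prednK // subn_gt0.
apply: hc; rewrite subnS prednK ?subn_gt0 //; exact: leq_subr.
Qed.

End Aux.

Theorem lemma5p9 (d n m : nat) (hd : (1 <= d)%N) (hn : (2 <= n)%N) (hm : (2 <= m)%N)
  (L Ls : seq (bspl d))
  (hL : lineage n m L) (hLs : lineage n m Ls) (hsub : {subset L <= Ls}) :
  let inR := fun phi : bspl d => (phi \in Ls) && (phi \notin L) in
  let inM := fun phi : bspl d => inR phi && inH n m L phi in
  (* (i) *)
  (forall psi0 : bspl d, inR psi0 ->
     exists (k : nat) (psi : nat -> bspl d),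
       psi 0%N = psi0 /\ inM (psi k) /\
       (forall j : nat, (j < k)%N ->
          inR (psi j) /\ ~~ inM (psi j) /\ child n m (psi j) (psi j.+1))) /\
  (* (ii) *)
  (forall phis : bspl d, inH n m Ls phis -> ~~ inH n m L phis ->
     exists psi : bspl d, inR psi /\ child n m phis psi) /\
  (* (iii) *)
  (forall phis : bspl d, inH n m Ls phis -> ~~ inH n m L phis ->
     exists (k : nat) (phi : bspl d), (1 <= k)%N /\ inM phi /\ inchk n m k phi phis).
Proof.
move=> inR inM.
have hi : forall psi0 : bspl d, inR psi0 ->
     exists (k : nat) (psi : nat -> bspl d),
       psi 0%N = psi0 /\ inM (psi k) /\
       (forall j : nat, (j < k)%N ->
          inR (psi j) /\ ~~ inM (psi j) /\ child n m (psi j) (psi j.+1)).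
  move=> psi0; exact: (@chain_i d n m L Ls hLs psi0.1.+1 psi0 (ltnSn _)).
have hii : forall phis : bspl d, inH n m Ls phis -> ~~ inH n m L phis ->
     exists psi : bspl d, inR psi /\ child n m phis psi.
  move=> phis; rewrite /inH => /andP[h1 h2].
  have h3 : phis \notin L by apply/negP=> /hsub; rewrite (negbTE h2).
  rewrite h3 andbT negb_or => /andP[nB nch].
  move: h1; rewrite (negbTE nB) /= => /hasP[p pin hc].
  exists p; split=> //; rewrite /inR pin /=.
  apply/negP=> pL; move/negP: nch; apply; apply/hasP; by exists p.
split=> //; split=> //.
move=> phis h1 h2; have [p [pR pc]] := hii phis h1 h2.
have [k [psi [h0 [hk hj]]]] := hi p pR.
exists k.+1, (psi k); split=> //; split=> //=.
exists p; split=> //.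
have := @chain_inchk d n m k psi (fun j hj' => (hj j hj').2.2) k (leqnn k).
by rewrite subnn h0.
Qed.
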